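(* Suppose $T$ has the f.s. dichotomy, $M\preceq\mathbb{C}$ is small, and $\langle A_i:i\in I\rangle$ is an $M$-f.s. sequence. Then for every $c\in\mathbb{C}$ there is a simple extension $\langle A'_j:j\in J\rangle$ of $\langle A_i:i\in I\rangle$ which is an $M$-f.s. sequence and has $c\in\bigcup_jA'_j$. Moreover, if $(I,\le)$ is a well-ordering with a maximum element, one may take $J=I$.
   Context: Work in a monster model $\mathbb{C}$ of $T$. For $B\supseteq M$, $\mathrm{tp}(A/B)$ is finitely satisfied in $M$ if each of its formulas is satisfied by a tuple from $M$. $T$ has the f.s. dichotomy if for every small model $M$ and finite tuples $\bar a,\bar b$ with $\mathrm{tp}(\bar b/M\bar a)$ finitely satisfied in $M$, for every singleton $c$ either $\mathrm{tp}(\bar b/M\bar ac)$ or $\mathrm{tp}(\bar bc/M\bar a)$ is finitely satisfied in $M$. For a sequence of sets $\langle A_i:i\in I\rangle$, $A_{<i}=\bigcup_{j<i}A_j$. An $M$-f.s. sequence is a sequence of sets $\langle A_i:i\in I\rangle$ such that $\mathrm{tp}(A_i/A_{<i}M)$ is finitely satisfied in $M$ for every $i$. A sequence $\langle A'_j:j\in J\rangle$ is a simple extension of $\langle A_i:i\in I\rangle$ if $I\subseteq J$ and $A_i\subseteq A'_i$ for all $i\in I$ (i.e. $\langle A_i\rangle$ is obtained from it by passing to a subsequence and shrinking the sets). *)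

(* Defs.v *)
From Stdlib Require Import List.
Import ListNotations.

Set Implicit Arguments.
Unset Strict Implicit.

Record signature := Signature { fsym : Type; rsym : Type }.

Section Logic.
Variable L : signature.

Inductive term : Type :=
| tvar : nat -> term
| tapp : fsym L -> list term -> term.

Inductive formula : Type :=
| feq : term -> term -> formula
| frel : rsym L -> list term -> formula
| fneg : formula -> formula
| fand : formula -> formula -> formula
| fex : nat -> formula -> formula.

Record structure := Structure {
  carrier :> Type;
  fint : fsym L -> list carrier -> carrier;
  rint : rsym L -> list carrier -> Prop }.

Variable C : structure.

Fixpoint eval (v : nat -> C) (t : term) : C :=
  match t with
  | tvar n => v n
  | tapp f l => fint f (map (eval v) l)
  end.

Definition upd (v : nat -> C) (n : nat) (c : C) : nat -> C :=
  fun k => if Nat.eqb k n then c else v k.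

Fixpoint sat_in (D : C -> Prop) (v : nat -> C) (phi : formula) : Prop :=
  match phi with
  | feq t1 t2 => eval v t1 = eval v t2
  | frel r l => rint r (map (eval v) l)
  | fneg p => ~ sat_in D v p
  | fand p q => sat_in D v p /\ sat_in D v q
  | fex n p => exists c, D c /\ sat_in D (upd v n c) p
  end.

Definition sat (v : nat -> C) (phi : formula) : Prop :=
  sat_in (fun _ => True) v phi.

Definition elem_sub (M : C -> Prop) : Prop :=
  (exists m, M m) /\
  (forall f l, Forall M l -> M (fint f l)) /\
  (forall phi v, (forall n, M (v n)) -> (sat_in M v phi <-> sat v phi)).

(* tp(A/B) is finitely satisfied in M: every formula phi(x_a.., b..) true in C,
   with the variables in S assigned elements of A and the others parameters
   from B, is satisfied after replacing each a in A by some element g a of M. *)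
Definition fs (M A B : C -> Prop) : Prop :=
  forall (phi : formula) (S : nat -> bool) (v : nat -> C),
    (forall n, if S n then A (v n) else B (v n)) ->
    sat v phi ->
    exists g : C -> C, (forall a, A a -> M (g a)) /\
      sat (fun n => if S n then g (v n) else v n) phi.

Definition setU (X Y : C -> Prop) : C -> Prop := fun x => X x \/ Y x.
Definition of_list (l : list C) : C -> Prop := fun x => In x l.
Definition set1 (c : C) : C -> Prop := fun x => x = c.

(* The f.s. dichotomy (for T = Th(C), over elementary substructures of C). *)
Definition fs_dichotomy : Prop :=
  forall M, elem_sub M ->
  forall a b : list C,
    fs M (of_list b) (setU M (of_list a)) ->
    forall c : C,
      fs M (of_list b) (setU (setU M (of_list a)) (set1 c)) \/
      fs M (setU (of_list b) (set1 c)) (setU M (of_list a)).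

Definition below (I : Type) (lt : I -> I -> Prop) (A : I -> C -> Prop) (i : I)
  : C -> Prop := fun x => exists j, lt j i /\ A j x.

Definition fs_seq (M : C -> Prop) (I : Type) (lt : I -> I -> Prop)
  (A : I -> C -> Prop) : Prop :=
  forall i, fs M (A i) (setU (below lt A i) M).

End Logic.

Arguments elem_sub {L} C M.
Arguments fs {L} C M A B.
Arguments fs_dichotomy {L} C.
Arguments fs_seq {L} C M {I} lt A.
Arguments sat {L} C v phi.

Definition strict_linear (I : Type) (lt : I -> I -> Prop) : Prop :=
  (forall x, ~ lt x x) /\
  (forall x y z, lt x y -> lt y z -> lt x z) /\
  (forall x y, lt x y \/ x = y \/ lt y x).

Definition well_founded_linear (I : Type) (lt : I -> I -> Prop) : Prop :=
  forall P : I -> Prop, (exists i, P i) ->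
    exists i, P i /\ forall j, P j -> ~ lt j i.

(* Main.v *)
Require Import Defs.
From Stdlib Require Import List Arith Classical ClassicalEpsilon FunctionalExtensionality.
Import ListNotations.

Section Aux.
Variable L : signature.
Variable C : structure L.

Fixpoint term_ind2 (P : term L -> Prop) (Hv : forall n, P (tvar L n))
  (Ha : forall f l, Forall P l -> P (tapp f l)) (t : term L) : P t :=
  match t with
  | tvar _ n => Hv n
  | tapp f l => Ha f l ((fix go (l : list (term L)) : Forall P l :=
       match l with
       | [] => Forall_nil _
       | t :: l => Forall_cons _ (term_ind2 P Hv Ha t) (go l)
       end) l)
  end.

Fixpoint fvt (t : term L) : list nat :=
  match t with
  | tvar _ n => [n]
  | tapp _ l => (fix go (l : list (term L)) : list nat :=
       match l with [] => [] | t :: l => fvt t ++ go l end) l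
  end.

Fixpoint fvl (l : list (term L)) : list nat :=
  match l with [] => [] | t :: l => fvt t ++ fvl l end.

Lemma fvt_app f l : fvt (tapp f l) = fvl l.
Proof. simpl. induction l; simpl; congruence. Qed.

Fixpoint fvf (p : formula L) : list nat :=
  match p with
  | feq t1 t2 => fvt t1 ++ fvt t2
  | frel _ l => fvl l
  | fneg p => fvf p
  | fand p q => fvf p ++ fvf q
  | fex n p => n :: fvf p
  end.

Lemma eval_agree (v v' : nat -> C) t :
  (forall n, In n (fvt t) -> v n = v' n) -> eval v t = eval v' t.
Proof.
  induction t as [n|f l IH] using term_ind2; intros H.
  - simpl. apply H. simpl; auto.
  - rewrite fvt_app in H. simpl. f_equal.
    induction IH as [|t l Ht Hl IHl]; simpl; auto.
    simpl in H. f_equal.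
    + apply Ht. intros n Hn; apply H; apply in_or_app; auto.
    + apply IHl. intros n Hn; apply H; apply in_or_app; auto.
Qed.

Lemma map_eval_agree (v v' : nat -> C) l :
  (forall n, In n (fvl l) -> v n = v' n) -> map (eval v) l = map (eval v') l.
Proof.
  induction l as [|t l IH]; simpl; intros H; auto.
  f_equal.
  - apply eval_agree. intros n Hn; apply H; apply in_or_app; auto.
  - apply IH. intros n Hn; apply H; apply in_or_app; auto.
Qed.

Lemma sat_agree (D : C -> Prop) phi : forall (v v' : nat -> C),
  (forall n, In n (fvf phi) -> v n = v' n) -> (sat_in D v phi <-> sat_in D v' phi).
Proof.
  induction phi as [t1 t2|r l|p IH|p IHp q IHq|n p IH]; intros v v' H; simpl in *.
  - rewrite (eval_agree v v' t1), (eval_agree v v' t2); [tauto| |];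
      intros; apply H; apply in_or_app; auto.
  - rewrite (map_eval_agree v v' l); [tauto|auto].
  - rewrite (IH v v'); [tauto|auto].
  - rewrite (IHp v v'), (IHq v v'); [tauto| |]; intros; apply H; apply in_or_app; auto.
  - split; intros [c [Dc Hc]]; exists c; split; auto;
      [rewrite <- (IH (upd v n c) (upd v' n c)) | rewrite (IH (upd v n c) (upd v' n c))];
      auto; intros m Hm; unfold upd; destruct (Nat.eqb m n); auto.
Qed.

Lemma fs_mono M (A A' B B' : C -> Prop) :
  fs C M A B -> (forall x, A' x -> A x) -> (forall x, B' x -> B x) -> fs C M A' B'.
Proof.
  intros H HA HB phi S v Hv Hs.
  destruct (H phi S v) as [g [Hg Hs']].
  - intro n; specialize (Hv n); destruct (S n); auto.
  - exact Hs.
  - exists g; split; auto.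
Qed.

Arguments fs_mono {M A A' B B'} _ _ _.

Lemma fs_empty M (B : C -> Prop) : fs C M (fun _ => False) B.
Proof.
  intros phi S v Hv Hs. exists (fun x => x). split; [intros a []|].
  replace (fun n => if S n then v n else v n) with v; auto.
  apply functional_extensionality; intro n; destruct (S n); reflexivity.
Qed.

Lemma fs_finite M (X Y : C -> Prop) : (exists m, M m) ->
  (forall x y : list C, (forall a, In a x -> X a) -> (forall a, In a y -> Y a) ->
     fs C M (of_list x) (setU M (of_list y))) -> fs C M X Y.
Proof.
  intros [m0 Hm0] H phi S v Hv Hs.
  pose (F := fvf phi).
  pose (x := map v (filter S F)).
  pose (y := map v (filter (fun n => negb (S n)) F)).
  pose (v' := fun n => if in_dec Nat.eq_dec n F then v n else m0).
  pose (S' := fun n => if in_dec Nat.eq_dec n F then S n else false).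
  assert (Hx : forall a, In a x -> X a).
  { intros a Ha. unfold x in Ha; apply in_map_iff in Ha as [n [<- Hn]].
    apply filter_In in Hn as [_ Hn]. specialize (Hv n); rewrite Hn in Hv; exact Hv. }
  assert (Hy : forall a, In a y -> Y a).
  { intros a Ha. unfold y in Ha; apply in_map_iff in Ha as [n [<- Hn]].
    apply filter_In in Hn as [_ Hn]. specialize (Hv n).
    destruct (S n); [discriminate|exact Hv]. }
  destruct (H x y Hx Hy phi S' v') as [g [Hg Hsat]].
  - intro n. unfold S', v'. destruct (in_dec Nat.eq_dec n F) as [i|ni].
    + destruct (S n) eqn:E.
      * unfold of_list, x. apply in_map. apply filter_In; auto.
      * right. unfold of_list, y. apply in_map. apply filter_In. rewrite E; auto.
    + left; exact Hm0.
  - unfold sat in *. apply (sat_agree _ _ v v'); auto.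
    intros n Hn; unfold v'. destruct (in_dec Nat.eq_dec n F); tauto.
  - exists (fun a => if excluded_middle_informative (In a x) then g a else m0).
    split.
    + intros a _. destruct (excluded_middle_informative (In a x)); auto.
    + unfold sat in *. apply (sat_agree _ _ _ (fun n => if S' n then g (v' n) else v' n)); auto.
      intros n Hn. unfold S', v'. destruct (in_dec Nat.eq_dec n F) as [_|ni]; [|tauto].
      destruct (S n) eqn:E; auto.
      destruct (excluded_middle_informative (In (v n) x)) as [_|ni]; auto.
      exfalso; apply ni. unfold x. apply in_map. apply filter_In; auto.
Qed.

Lemma not_fs_finite M (X Y : C -> Prop) : (exists m, M m) -> ~ fs C M X Y ->
  exists x y : list C, (forall a, In a x -> X a) /\ (forall a, In a y -> Y a) /\
     ~ fs C M (of_list x) (setU M (of_list y)).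
Proof.
  intros Hm Hn. apply NNPP; intro Hc. apply Hn. apply fs_finite; auto.
  intros x y Hx Hy. apply NNPP; intro Hf. apply Hc. exists x, y; auto.
Qed.

Arguments not_fs_finite {M X Y} _ _.

Definition exl (l : list nat) (p : formula L) := fold_right (fun n q => fex n q) p l.

Lemma sat_exl (D : C -> Prop) l p : forall w,
  sat_in D w (exl l p) <-> exists u, (forall n, In n l -> D (u n)) /\
     (forall n, ~ In n l -> u n = w n) /\ sat_in D u p.
Proof.
  induction l as [|n l IH]; intro w; simpl.
  - split.
    + intro H; exists w; split; [intros _ []|split; auto].
    + intros [u [_ [Hu Hp]]].
      replace w with u; auto. apply functional_extensionality; intro; apply Hu; auto.
  - split.
    + intros [c [Dc Hs]]. apply IH in Hs as [u [Hu1 [Hu2 Hp]]].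
      exists u; split; [|split; auto].
      * intros n' [<-|Hn'].
        -- destruct (in_dec Nat.eq_dec n l) as [i|ni]; [auto|].
           rewrite Hu2 by auto. unfold upd. rewrite Nat.eqb_refl; auto.
        -- auto.
      * intros n' Hn'. rewrite Hu2 by tauto. unfold upd.
        destruct (Nat.eqb n' n) eqn:E; auto.
        apply Nat.eqb_eq in E; subst; tauto.
    + intros [u [Hu1 [Hu2 Hp]]]. exists (u n). split; [auto|].
      apply IH. exists u; split; auto. split; auto.
      intros n' Hn'. unfold upd. destruct (Nat.eqb n' n) eqn:E.
      * apply Nat.eqb_eq in E; subst; auto.
      * apply Hu2. intros [E'|E']; [subst; rewrite Nat.eqb_refl in E; discriminate|tauto].
Qed.

Definition eqs (l : list nat) (x : nat) : formula L :=
  fold_right (fun n q => fand (feq (tvar L n) (tvar L x)) q) (feq (tvar L x) (tvar L x)) l.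

Lemma sat_eqs (D : C -> Prop) u l x :
  sat_in D u (eqs l x) <-> forall n, In n l -> u n = u x.
Proof.
  induction l as [|n l IH]; simpl.
  - split; auto. intros _ _ [].
  - rewrite IH. split.
    + intros [H1 H2] n' [<-|H]; auto.
    + intros H; split; auto.
Qed.

Lemma fs_elem M (c : C) : elem_sub C M -> fs C M (set1 c) M.
Proof.
  intros [[m0 Hm0] [_ He]] phi S v Hv Hs.
  pose (F := fvf phi).
  destruct (filter S F) as [|n0 l'] eqn:El.
  - exists (fun _ => m0). split; [auto|].
    unfold sat in *. apply (sat_agree _ _ v); auto.
    intros n Hn. destruct (S n) eqn:E; auto.
    assert (In n (filter S F)) by (apply filter_In; auto). rewrite El in H; destruct H.
  - pose (l := n0 :: l').
    pose (w := fun n => if S n then m0 else v n).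
    assert (Hw : forall n, M (w n)).
    { intro n; unfold w; specialize (Hv n); destruct (S n); auto. }
    assert (HinS : forall n, In n F -> (In n l <-> S n = true)).
    { intros n Hn. unfold l; rewrite <- El. rewrite filter_In; tauto. }
    pose (th := fand (eqs l n0) phi).
    assert (Hsat : sat C w (exl l th)).
    { unfold sat. apply sat_exl.
      exists (fun n => if in_dec Nat.eq_dec n l then c else w n).
      split; [auto|split].
      - intros n Hn; destruct (in_dec Nat.eq_dec n l); tauto.
      - unfold th. cbn [sat_in]. split.
        + apply sat_eqs. intros n Hn.
          destruct (in_dec Nat.eq_dec n l); [|tauto].
          destruct (in_dec Nat.eq_dec n0 l) as [|ni]; auto. exfalso; apply ni; simpl; auto.
        + apply (sat_agree _ _ v); auto.
          intros n Hn. specialize (Hv n). destruct (in_dec Nat.eq_dec n l) as [i|ni].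
          * apply (HinS n Hn) in i. rewrite i in Hv. unfold set1 in Hv. symmetry; exact (eq_sym Hv).
          * unfold w. destruct (S n) eqn:E; auto. exfalso; apply ni; apply HinS; auto. }
    apply He in Hsat; [|auto].
    apply sat_exl in Hsat as [u [Hu1 [Hu2 Hth]]].
    assert (HuM : forall n, M (u n)).
    { intro n. destruct (in_dec Nat.eq_dec n l); auto. rewrite Hu2; auto. }
    apply He in Hth; auto. destruct Hth as [Heq Hp].
    pose proof (proj1 (sat_eqs (fun _ => True) u l n0) Heq) as Heq2; clear Heq; rename Heq2 into Heq.
    exists (fun _ => u n0). split; [auto|].
    unfold sat in *. apply (sat_agree _ _ u); auto.
    intros n Hn. destruct (S n) eqn:E.
    + apply Heq. apply HinS; auto.
    + rewrite Hu2; [unfold w; rewrite E; auto|].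
      intro Hi. apply HinS in Hi; auto. congruence.
Qed.

Arguments fs_elem {M} c _.

Lemma ex_filter (P : C -> Prop) (l : list C) :
  exists l', forall z, In z l' <-> In z l /\ P z.
Proof.
  induction l as [|a l [l' IH]].
  - exists []; simpl; tauto.
  - destruct (classic (P a)).
    + exists (a :: l'); intro z; simpl; rewrite IH; split; [intros [<-|]; tauto|].
      intros [[<-|] Hz]; tauto.
    + exists l'; intro z; simpl; rewrite IH; split; [tauto|].
      intros [[<-|] Hz]; tauto.
Qed.

Lemma gd_set M (B Y : C -> Prop) c : fs_dichotomy C -> elem_sub C M ->
  fs C M B (setU Y M) ->
  fs C M B (setU (setU Y M) (set1 c)) \/ fs C M (setU B (set1 c)) (setU Y M).
Proof.
  intros HD HM H.
  assert (Hm : exists m, M m) by (destruct HM as [Hm _]; exact Hm).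
  destruct (classic (fs C M B (setU (setU Y M) (set1 c)))) as [|h1]; [left; auto|].
  destruct (classic (fs C M (setU B (set1 c)) (setU Y M))) as [|h2]; [right; auto|].
  exfalso.
  destruct (not_fs_finite Hm h1) as [x1 [y1 [Hx1 [Hy1 Hn1]]]].
  destruct (not_fs_finite Hm h2) as [x2 [y2 [Hx2 [Hy2 Hn2]]]].
  destruct (ex_filter B x2) as [b2 Hb2].
  destruct (ex_filter (setU Y M) (y1 ++ y2)) as [a Ha].
  pose (b := x1 ++ b2).
  assert (Hb : fs C M (of_list b) (setU M (of_list a))).
  { apply (fs_mono H).
    - intros z Hz. unfold of_list, b in Hz. apply in_app_iff in Hz as [Hz|Hz]; auto.
      apply Hb2 in Hz; tauto.
    - intros z [Hz|Hz]; [right; auto|]. apply Ha in Hz; tauto. }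
  destruct (HD M HM a b Hb c) as [Hc|Hc].
  - apply Hn1. apply (fs_mono Hc).
    + intros z Hz; unfold of_list, b; apply in_app_iff; auto.
    + intros z [Hz|Hz]; [left; left; auto|].
      destruct (Hy1 z Hz) as [Hz'|Hz']; [left; right; apply Ha; rewrite in_app_iff; auto|right; auto].
  - apply Hn2. apply (fs_mono Hc).
    + intros z Hz. destruct (Hx2 z Hz) as [Hz'|Hz']; [left|right; auto].
      unfold of_list, b. apply in_app_iff; right; apply Hb2; auto.
    + intros z [Hz|Hz]; [left; auto|]. right. apply Ha. rewrite in_app_iff; auto.
Qed.

Lemma fs_trans M (X Z B : C -> Prop) : (forall a, M a -> B a) ->
  fs C M X (setU B Z) -> fs C M Z B -> fs C M (setU X Z) B.
Proof.
  intros HMB H1 H2 phi S v Hv Hs.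
  pose (S1 := fun n => if excluded_middle_informative (S n = true /\ X (v n)) then true else false).
  destruct (H1 phi S1 v) as [g1 [Hg1 Hs1]].
  { intro n. unfold S1. destruct (excluded_middle_informative (S n = true /\ X (v n))) as [[_ HX]|Hn]; auto.
    specialize (Hv n). destruct (S n) eqn:E.
    - destruct Hv as [Hx|Hz]; [exfalso; auto|right; auto].
    - left; auto. }
  { exact Hs. }
  pose (v1 := fun n => if S1 n then g1 (v n) else v n).
  pose (S2 := fun n => if S1 n then false else S n).
  destruct (H2 phi S2 v1) as [g2 [Hg2 Hs2]].
  { intro n. unfold S2, v1, S1.
    destruct (excluded_middle_informative (S n = true /\ X (v n))) as [[_ HX]|Hn]; auto.
    specialize (Hv n). destruct (S n) eqn:E; auto.
    destruct Hv as [Hx|Hz]; [exfalso; auto|auto]. }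
  { exact Hs1. }
  exists (fun a => if excluded_middle_informative (X a) then g1 a else g2 a). split.
  - intros a Ha. destruct (excluded_middle_informative (X a)) as [x|nx]; [apply Hg1; auto|].
    apply Hg2. destruct Ha; [contradiction|auto].
  - replace (fun n => if S n then (if excluded_middle_informative (X (v n)) then g1 (v n) else g2 (v n)) else v n)
      with (fun n => if S2 n then g2 (v1 n) else v1 n); [exact Hs2|].
    apply functional_extensionality; intro n. unfold S2, v1, S1.
    destruct (excluded_middle_informative (S n = true /\ X (v n))) as [[HS HX]|Hn].
    + rewrite HS. destruct (excluded_middle_informative (X (v n))); [auto|contradiction].
    + destruct (S n) eqn:E; auto.
      destruct (excluded_middle_informative (X (v n))); [exfalso; auto|auto].
Qed.

Definition addc (I : Type) (A : I -> C -> Prop) (k : I) (c : C) : I -> C -> Prop :=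
  fun j x => A j x \/ (j = k /\ x = c).

Arguments addc {I} A k c _.

Lemma join_seq M (I : Type) (lt : I -> I -> Prop) A k c : strict_linear lt ->
  fs_seq C M lt A ->
  fs C M (setU (A k) (set1 c)) (setU (below lt A k) M) ->
  (forall j, lt k j -> fs C M (A j) (setU (setU (below lt A j) M) (set1 c))) ->
  fs_seq C M lt (addc A k c).
Proof.
  intros [Hirr [Htr Htot]] Hs HK Hj j. unfold addc.
  destruct (classic (j = k)) as [->|Hne].
  - apply (fs_mono HK).
    + intros x [H|[_ H]]; [left; auto|right; auto].
    + intros x [[j' [Hl [H|[-> _]]]]|H]; [left; exists j'; auto|exfalso; eapply Hirr; eauto|right; auto].
  - destruct (classic (lt k j)) as [Hkj|Hnkj].
    + apply (fs_mono (Hj j Hkj)).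
      * intros x [H|[H _]]; [auto|contradiction].
      * intros x [[j' [Hl [H|[_ ->]]]]|H]; [left; left; exists j'; auto|right; reflexivity|left; right; auto].
    + apply (fs_mono (Hs j)).
      * intros x [H|[H _]]; [auto|contradiction].
      * intros x [[j' [Hl [H|[-> _]]]]|H]; [left; exists j'; auto|contradiction|right; auto].
Qed.

Lemma cut_fs M (I : Type) (lt : I -> I -> Prop) A c (Dp : I -> Prop) :
  elem_sub C M -> strict_linear lt ->
  (forall d, Dp d -> fs C M (setU (A d) (set1 c)) (setU (below lt A d) M)) ->
  (forall d, Dp d -> exists d', Dp d' /\ lt d d') ->
  fs C M (set1 c) (setU (fun x => exists j, (exists d, Dp d /\ (j = d \/ lt j d)) /\ A j x) M).
Proof.
  intros HM [Hirr [Htr Htot]] HD Hnm.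
  apply fs_finite; [destruct HM as [Hm _]; exact Hm|].
  intros x y Hx Hy.
  assert (Cl : (forall z, In z y -> M z) \/
              exists i, Dp i /\ forall z, In z y -> below lt A i z \/ M z).
  { induction y as [|z y IH].
    - left; intros z [].
    - assert (IH' : (forall z, In z y -> M z) \/
              exists i, Dp i /\ forall z, In z y -> below lt A i z \/ M z)
        by (apply IH; intros; apply Hy; simpl; auto).
      destruct (Hy z (or_introl eq_refl)) as [[j [[d [Hd Hjd]] Hjz]]|Hz].
      + destruct (Hnm d Hd) as [d' [Hd' Hdd']].
        assert (Hjd' : lt j d') by (destruct Hjd as [->|Hjd]; eauto).
        destruct IH' as [IH'|[i [Hi Hiy]]].
        * right; exists d'; split; auto. intros z' [<-|Hz']; [left; exists j; auto|right; auto].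
        * destruct (Htot i d') as [Hl|[<-|Hl]].
          -- right; exists d'; split; auto. intros z' [<-|Hz']; [left; exists j; auto|].
             destruct (Hiy z' Hz') as [[j' [Hj' Ha]]|]; [left; exists j'; eauto|auto].
          -- right; exists i; split; auto. intros z' [<-|Hz']; [left; exists j; auto|auto].
          -- right; exists i; split; auto. intros z' [<-|Hz']; [left; exists j; eauto|auto].
      + destruct IH' as [IH'|[i [Hi Hiy]]].
        * left; intros z' [<-|Hz']; auto.
        * right; exists i; split; auto. intros z' [<-|Hz']; auto. }
  destruct Cl as [Cl|[i [Hi Hiy]]].
  - apply (fs_mono (fs_elem c HM)); auto.
    intros z [Hz|Hz]; auto.
  - apply (fs_mono (HD i Hi)).
    + intros z Hz; right; apply Hx; auto.
    + intros z [Hz|Hz]; [right; auto|]. destruct (Hiy z Hz); [left|right]; auto.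
Qed.

Definition ltO (I : Type) (lt : I -> I -> Prop) (D : I -> Prop) (a b : option I) : Prop :=
  match a, b with
  | Some i, Some j => lt i j
  | Some i, None => D i
  | None, Some j => ~ D j
  | None, None => False
  end.

Arguments ltO {I} lt D a b.

Lemma ltO_lin (I : Type) (lt : I -> I -> Prop) (D : I -> Prop) : strict_linear lt ->
  (forall a b, lt a b -> D b -> D a) -> strict_linear (ltO lt D).
Proof.
  intros [Hirr [Htr Htot]] Hdown. split; [|split].
  - intros [x|]; simpl; auto.
  - intros [x|] [y|] [z|]; simpl; intros; eauto; try tauto.
    destruct (Htot x z) as [|[<-|Hl]]; auto; [contradiction|].
    exfalso; apply H0; eapply Hdown; eauto.
  - intros [x|] [y|]; simpl.
    + destruct (Htot x y) as [|[->|]]; auto.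
    + destruct (classic (D x)); auto.
    + destruct (classic (D y)); auto.
    + auto.
Qed.

End Aux.
Arguments fs_mono {L C M A A' B B'} _ _ _.
Arguments fs_elem {L C M} c _.
Arguments gd_set {L C M B Y} c _ _ _.
Arguments cut_fs {L C M I lt} A c {Dp} _ _ _ _.
Arguments fs_empty {L C} M B.
Arguments addc {L C I} A k c _.
Arguments ltO {I} lt D a b.


Theorem lemma3 :
  forall (L : signature) (C : structure L),
  fs_dichotomy C ->
  forall M : C -> Prop, elem_sub C M ->
  forall (I : Type) (ltI : I -> I -> Prop), strict_linear ltI ->
  forall A : I -> C -> Prop, fs_seq C M ltI A ->
  forall c : C,
    (exists (J : Type) (ltJ : J -> J -> Prop) (e : I -> J) (A' : J -> C -> Prop),
        strict_linear ltJ /\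
        (forall i i', ltI i i' <-> ltJ (e i) (e i')) /\
        (forall i x, A i x -> A' (e i) x) /\
        fs_seq C M ltJ A' /\
        (exists j, A' j c)) /\
    (well_founded_linear ltI ->
     (exists imax, forall i, i = imax \/ ltI i imax) ->
     exists A' : I -> C -> Prop,
        (forall i x, A i x -> A' i x) /\
        fs_seq C M ltI A' /\
        (exists j, A' j c)).
Proof.
  intros L C HD M HM I lt Hlin A Hseq c.
  pose (Dp := fun i => ~ fs C M (A i) (setU (setU (below lt A i) M) (set1 c))).
  assert (HDp : forall i, Dp i -> fs C M (setU (A i) (set1 c)) (setU (below lt A i) M)).
  { intros i Hi. destruct (gd_set c HD HM (Hseq i)); [contradiction|auto]. }
  assert (HnDp : forall i, ~ Dp i -> fs C M (A i) (setU (setU (below lt A i) M) (set1 c))).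
  { intros i Hi. apply NNPP; exact Hi. }
  destruct Hlin as [Hirr [Htr Htot]] eqn:Hlin'.
  destruct (classic (exists i, Dp i /\ forall j, Dp j -> ~ lt i j)) as [[k [Hk Hkmax]]|Hnomax].
  - assert (Hj : fs_seq C M lt (addc A k c)).
    { apply join_seq; auto. intros j Hkj. apply HnDp. intro Hdj. apply (Hkmax j); auto. }
    split.
    + exists I, lt, (fun i => i), (addc A k c). split; [auto|split; [tauto|split; [|split; auto]]].
      * intros i x H; left; auto.
      * exists k; right; auto.
    + intros _ _. exists (addc A k c). split; [intros i x H; left; auto|split; auto].
      exists k; right; auto.
  - assert (Hnm : forall d, Dp d -> exists d', Dp d' /\ lt d d').
    { intros d Hd. apply NNPP; intro Hc. apply Hnomax. exists d; split; auto.
      intros j Hj Hl. apply Hc. exists j; auto. }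
    pose (D := fun j => exists d, Dp d /\ (j = d \/ lt j d)).
    assert (Hdown : forall a b, lt a b -> D b -> D a).
    { intros a b Hab [d [Hd Hbd]]. exists d; split; auto. right.
      destruct Hbd as [<-|]; eauto. }
    assert (Hcut := cut_fs A c HM Hlin HDp Hnm).
    fold D in Hcut.
    assert (HnD : forall j, ~ D j -> fs C M (A j) (setU (setU (below lt A j) M) (set1 c))).
    { intros j Hj. apply HnDp. intro Hd. apply Hj. exists j; auto. }
    split.
    + pose (A0 := fun (oj : option I) x => match oj with Some j => A j x | None => False end).
      assert (Hs0 : fs_seq C M (ltO lt D) A0).
      { intros [i|].
        - apply (fs_mono (Hseq i)); [simpl; auto|].
          intros x [[[j|] [Hl Ha]]|Hx]; [left; exists j; auto|destruct Ha|right; auto].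
        - apply (fs_mono (fs_empty M (setU (below (ltO lt D) A0 None) M))); [simpl; auto|intros x H; exact H]. }
      exists (option I), (ltO lt D), (@Some I), (addc A0 None c).
      split; [apply ltO_lin; auto|split; [simpl; tauto|split; [|split]]].
      * intros i x H; left; exact H.
      * apply join_seq; auto. apply ltO_lin; auto.
        -- apply (fs_mono Hcut).
           ++ intros x [[]|H]; exact H.
           ++ intros x [[[j|] [Hl Ha]]|H]; [left; exists j; split; auto|destruct Ha|right; auto].
        -- intros [j|] Hl; [|destruct Hl]. simpl in Hl.
           apply (fs_mono (HnD j Hl)); [simpl; auto|].
           intros x [[[[j'|] [Hl' Ha]]|H]|H]; [left; left; exists j'; auto|destruct Ha|left; right; auto|right; auto].
      * exists None; right; auto.
    + intros Hwf [imax Himax].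
      assert (HnDimax : ~ D imax).
      { intros [d [Hd Hid]].
        assert (d = imax).
        { destruct Hid as [->|Hl]; auto. exfalso.
          destruct (Himax d) as [->|Hl']; [eapply Hirr; eauto|eapply Hirr; eauto]. }
        subst d. destruct (Hnm imax Hd) as [d' [_ Hl]].
        destruct (Himax d') as [->|Hl']; eapply Hirr; eauto. }
      destruct (Hwf (fun j => ~ D j)) as [k [Hk Hkmin]]; [exists imax; auto|].
      assert (HJ : fs_seq C M lt (addc A k c)).
      { apply join_seq; auto.
        - apply fs_trans.
          + intros a Ha; right; auto.
          + apply HnD; auto.
          + apply (fs_mono Hcut); [auto|].
            intros x [[j [Hl Ha]]|H]; [left|right; auto]. exists j; split; auto.
            apply NNPP; intro Hnd. apply (Hkmin j Hnd Hl).
        - intros j Hkj. apply HnD. intro Hd. apply Hk. eapply Hdown; eauto. }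
      exists (addc A k c). split; [intros i x H; left; auto|split; auto].
      exists k; right; auto.
Qed.
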